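(* Let $G$ be a countably infinite disconnected IH-homogeneous graph. Then there exist $n,m\in\omega+1$ (each either a positive integer or $\omega$) with $\max\{m,n\}=\omega$ such that $G\cong I_n[K_m]$.
   Context: All graphs are undirected and loopless; subgraphs are induced. $G$ is IH-homogeneous if every isomorphism between finite induced subgraphs of $G$ is the restriction of an endomorphism of $G$ (a map $G\to G$ sending adjacent vertices to adjacent vertices). $K_\kappa$ is the complete graph and $I_\kappa$ the edgeless graph on $\kappa$ vertices; the lexicographic product $G[H]$ has vertex set $G\times H$ with $(g,h)\sim(g',h')$ iff $g\sim g'$, or $g=g'$ and $h\sim h'$; so $I_n[K_m]$ is a disjoint union of $n$ copies of $K_m$. *)

(* Defs.v *)
From Stdlib Require Import List Relations.
Import ListNotations.

Definition simple_graph (V : Type) (adj : V -> V -> Prop) : Prop :=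
  (forall x y, adj x y -> adj y x) /\ (forall x, ~ adj x x).

Definition countably_infinite (V : Type) : Prop :=
  exists e : nat -> V, (forall i j, e i = e j -> i = j) /\ (forall v, exists i, e i = v).

Definition disconnected (V : Type) (adj : V -> V -> Prop) : Prop :=
  exists x y : V, ~ clos_refl_trans V adj x y.

Definition endomorphism (V : Type) (adj : V -> V -> Prop) (g : V -> V) : Prop :=
  forall x y, adj x y -> adj (g x) (g y).

(* IH-homogeneous: every isomorphism f between the finite induced subgraphs on
   A and on f(A) (f injective on A, preserving and reflecting adjacency on A)
   is the restriction of an endomorphism of G. *)
Definition IH_homogeneous (V : Type) (adj : V -> V -> Prop) : Prop :=
  forall (A : list V) (f : V -> V),
    (forall x y, In x A -> In y A -> f x = f y -> x = y) ->
    (forall x y, In x A -> In y A -> (adj x y <-> adj (f x) (f y))) ->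
    exists g : V -> V, endomorphism V adj g /\ (forall x, In x A -> g x = f x).

(* Elements of omega+1 minus 0: Some k (k >= 1) is the positive integer k,
   None is omega. [below c i] means i < c, i.e. i ranges over a set of size c. *)
Definition below (c : option nat) (i : nat) : Prop :=
  match c with None => True | Some k => i < k end.

Definition positive_card (c : option nat) : Prop :=
  match c with None => True | Some k => 0 < k end.

(* I_n[K_m]: vertex set {(i,j) | i < n, j < m}, (i,j) ~ (i',j') iff i = i' and j <> j'. *)
Definition IK_vertex (n m : option nat) (p : nat * nat) : Prop :=
  below n (fst p) /\ below m (snd p).

Definition IK_adj (p q : nat * nat) : Prop :=
  fst p = fst q /\ snd p <> snd q.

Definition iso_to_IK (V : Type) (adj : V -> V -> Prop) (n m : option nat) : Prop :=
  exists phi : V -> nat * nat,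
    (forall v, IK_vertex n m (phi v)) /\
    (forall u v, phi u = phi v -> u = v) /\
    (forall p, IK_vertex n m p -> exists v, phi v = p) /\
    (forall u v, adj u v <-> IK_adj (phi u) (phi v)).

(* Main.v *)
Require Import Defs.
From Stdlib Require Import List Relations.
From Stdlib Require Import Classical ClassicalEpsilon Lia Arith.
Import ListNotations.

Definition dP (P : nat -> Prop) (i : nat) : bool :=
  if excluded_middle_informative (P i) then true else false.

Definition cnt (P : nat -> Prop) (N : nat) : nat := length (filter (dP P) (seq 0 N)).

Lemma dP_true P i : dP P i = true <-> P i.
Proof. unfold dP; destruct (excluded_middle_informative (P i)); split; intro H; auto; try discriminate; contradiction. Qed.

Lemma cnt_S P N : cnt P (S N) = cnt P N + (if dP P N then 1 else 0).
Proof. unfold cnt. rewrite seq_S, filter_app, length_app. simpl. destruct (dP P N); simpl; lia. Qed.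

Lemma cnt_0 P : cnt P 0 = 0. Proof. reflexivity. Qed.

Lemma cnt_mono P a b : a <= b -> cnt P a <= cnt P b.
Proof. induction 1; auto. rewrite cnt_S. lia. Qed.

Lemma cnt_P P a : P a -> cnt P (S a) = S (cnt P a).
Proof. intro H. rewrite cnt_S. apply dP_true in H. rewrite H. lia. Qed.

Lemma cnt_strict P a b : P a -> a < b -> cnt P a < cnt P b.
Proof. intros H Hab. pose proof (cnt_mono P (S a) b Hab) as H0. rewrite cnt_P in H0 by auto. lia. Qed.

Lemma cnt_inj P a b : P a -> P b -> cnt P a = cnt P b -> a = b.
Proof.
  intros Ha Hb H. destruct (lt_eq_lt_dec a b) as [[Hl|He]|Hl]; auto.
  - pose proof (cnt_strict P a b Ha Hl). lia.
  - pose proof (cnt_strict P b a Hb Hl). lia.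
Qed.

Lemma cnt_ext P Q N : (forall i, P i <-> Q i) -> cnt P N = cnt Q N.
Proof.
  intro H. induction N; auto. rewrite !cnt_S, IHN.
  assert (dP P N = dP Q N) as ->; auto.
  unfold dP; destruct (excluded_middle_informative (P N)), (excluded_middle_informative (Q N)); auto;
  exfalso; firstorder.
Qed.

Definition realized P k := exists N, k < cnt P N.

Lemma realized_iff P k : realized P k <-> exists i, P i /\ cnt P i = k.
Proof. split.
- intros [N HN]. induction N as [|N IH]; [rewrite cnt_0 in HN; lia|].
  rewrite cnt_S in HN. destruct (k <? cnt P N) eqn:E.
  + apply IH. apply Nat.ltb_lt; auto.
  + apply Nat.ltb_ge in E. destruct (dP P N) eqn:E2.
    * exists N. split. apply dP_true; auto. lia.
    * lia.
- intros [i [Hi Hk]]. exists (S i). rewrite cnt_P; auto; lia.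
Qed.

Lemma least_ex (Q : nat -> Prop) n : Q n -> exists m, Q m /\ forall j, Q j -> m <= j.
Proof.
  induction n as [n IH] using lt_wf_ind. intro Hn.
  destruct (classic (exists j, j < n /\ Q j)) as [[j [Hj HQ]]|Hno].
  - exact (IH j Hj HQ).
  - exists n. split; auto. intros j Hj. destruct (le_lt_dec n j); auto. exfalso; apply Hno; eauto.
Qed.

Lemma card_exists P : exists c, forall k, below c k <-> realized P k.
Proof.
  destruct (classic (forall k, realized P k)) as [Hall|Hn].
  - exists None. simpl. firstorder.
  - apply not_all_ex_not in Hn. destruct Hn as [k0 Hk0].
    destruct (least_ex (fun k => ~ realized P k) k0 Hk0) as [M [HM Hmin]].
    exists (Some M). simpl. intro k. split.
    + intro Hk. destruct (classic (realized P k)) as [|Hnr]; auto. specialize (Hmin k Hnr). lia.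
    + intros [N HN]. destruct (le_lt_dec M k) as [Hle|Hlt]; [exfalso; apply HM; exists N; lia | exact Hlt].
Qed.

Lemma list_bound (l : list nat) : exists B, forall x, In x l -> x < B.
Proof. induction l as [|a l [B HB]]. exists 0; simpl; tauto.
  exists (S (Nat.max a B)). intros x [->|Hx]; [lia| specialize (HB x Hx); lia]. Qed.

Lemma realized_transfer (P Q : nat -> Prop) (f : nat -> nat) k :
  (forall i, P i -> Q (f i)) -> (forall i j, P i -> P j -> f i = f j -> i = j) ->
  realized P k -> realized Q k.
Proof.
  intros HPQ Hinj [N HN].
  set (l := filter (dP P) (seq 0 N)).
  destruct (list_bound (map f l)) as [B HB].
  exists B.
  assert (Hnd : NoDup (map f l)).
  { apply NoDup_map_NoDup_ForallPairs.
    - intros x y Hx Hy. unfold l in Hx, Hy. apply filter_In in Hx, Hy. apply Hinj; apply dP_true; tauto.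
    - apply NoDup_filter, seq_NoDup. }
  assert (Hincl : incl (map f l) (filter (dP Q) (seq 0 B))).
  { intros y Hy. apply filter_In. split.
    - apply in_seq. specialize (HB y Hy). lia.
    - apply in_map_iff in Hy. destruct Hy as [x [<- Hx]]. unfold l in Hx. apply filter_In in Hx.
      apply dP_true. apply HPQ. apply dP_true. tauto. }
  pose proof (NoDup_incl_length Hnd Hincl) as H. rewrite length_map in H.
  unfold cnt in *. fold l in HN. lia.
Qed.

Theorem lemma3p1 (V : Type) (adj : V -> V -> Prop)
  (Hg : simple_graph V adj) (Hcount : countably_infinite V)
  (Hdisc : disconnected V adj) (Hih : IH_homogeneous V adj) :
  exists n m : option nat,
    positive_card n /\ positive_card m /\ (n = None \/ m = None) /\
    iso_to_IK V adj n m.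
Proof.
  destruct Hg as [Hsym Hirr].
  destruct Hcount as [e [Einj Esurj]].
  pose (idx := fun v => proj1_sig (constructive_indefinite_description _ (Esurj v))).
  assert (Hidx : forall v, e (idx v) = v).
  { intro v. exact (proj2_sig (constructive_indefinite_description _ (Esurj v))). }
  assert (Hidx2 : forall i, idx (e i) = i). { intro i. apply Einj. apply Hidx. }
  pose (A := fun i j => adj (e i) (e j)).
  pose (R := fun i j => i = j \/ A i j).
  assert (Hkey : forall a b : V, a <> b -> ~ adj a b -> ~ clos_refl_trans V adj a b).
  { destruct Hdisc as [x [y Hxy]].
    intros a b Hab Hnadj Hcon.
    assert (Hxy' : x <> y). { intro; subst; apply Hxy; apply rt_refl. }
    pose (f := fun z => if excluded_middle_informative (z = a) then x else y).
    assert (fa : f a = x). { unfold f; destruct (excluded_middle_informative (a = a)); congruence. }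
    assert (fb : f b = y). { unfold f; destruct (excluded_middle_informative (b = a)); congruence. }
    destruct (Hih [a; b] f) as [g [Hg Hgf]].
    - intros p q Hp Hq Hpq. simpl in Hp, Hq.
      destruct Hp as [<-|[<-|[]]], Hq as [<-|[<-|[]]]; congruence.
    - intros p q Hp Hq. simpl in Hp, Hq.
      destruct Hp as [<-|[<-|[]]], Hq as [<-|[<-|[]]]; rewrite ?fa, ?fb; split; intro H;
      exfalso; first [ exact (Hirr _ H) | exact (Hnadj H) | exact (Hnadj (Hsym _ _ H))
        | exact (Hxy (rt_step _ _ _ _ H)) | exact (Hxy (rt_step _ _ _ _ (Hsym _ _ H))) ].
    - apply Hxy. rewrite <- fa, <- fb, <- (Hgf a), <- (Hgf b) by (simpl; auto).
      clear -Hg Hcon. induction Hcon.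
      + apply rt_step; auto.
      + apply rt_refl.
      + eapply rt_trans; eauto. }
  assert (Rrefl : forall i, R i i) by (intro; left; reflexivity).
  assert (Rsym : forall i j, R i j -> R j i).
  { intros i j [H|H]; [left; auto | right; apply Hsym; exact H]. }
  assert (Rtrans : forall i j k, R i j -> R j k -> R i k).
  { intros i j k Hij Hjk. destruct (classic (i = k)) as [|Hik]; [left; auto|].
    destruct (classic (A i k)) as [|Hnik]; [right; auto|].
    exfalso. apply (Hkey (e i) (e k)).
    - intro H; apply Hik, Einj, H.
    - exact Hnik.
    - apply rt_trans with (e j).
      + destruct Hij as [<-|H]; [apply rt_refl|apply rt_step; exact H].
      + destruct Hjk as [<-|H]; [apply rt_refl|apply rt_step; exact H]. }
  assert (Hcls : forall a b, exists f : nat -> nat,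
     (forall i, R i a -> R (f i) b) /\ (forall i j, R i a -> R j a -> f i = f j -> i = j)).
  { intros a b.
    destruct (Hih [e a] (fun _ => e b)) as [g [Hg Hgf]].
    - intros p q Hp Hq _. simpl in Hp, Hq. destruct Hp as [<-|[]], Hq as [<-|[]]; auto.
    - intros p q Hp Hq. simpl in Hp, Hq. destruct Hp as [<-|[]], Hq as [<-|[]].
      split; intro H; exfalso; eapply Hirr; eauto.
    - assert (Hga : g (e a) = e b) by (apply (Hgf (e a)); simpl; auto).
      exists (fun i => idx (g (e i))). split.
      + intros i [->|H].
        * left. rewrite Hga; apply Hidx2.
        * right. unfold A. rewrite Hidx. rewrite <- Hga. apply Hg. exact H.
      + intros i j Hi Hj Hf. destruct (classic (i = j)) as [|Hne]; auto. exfalso.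
        assert (Hij : R i j) by (eapply Rtrans; [exact Hi| apply Rsym; exact Hj]).
        destruct Hij as [|Hij]; [contradiction|].
        unfold A in Hij. apply Hg in Hij.
        assert (Hge : g (e i) = g (e j)).
        { cbv beta in Hf. rewrite <- (Hidx (g (e i))), <- (Hidx (g (e j))), Hf. reflexivity. }
        rewrite Hge in Hij. eapply Hirr; eauto. }
  assert (Hlead : forall i, exists l, R l i /\ forall j, R j i -> l <= j).
  { intro i. apply (least_ex (fun l => R l i) i). apply Rrefl. }
  pose (lead := fun i => proj1_sig (constructive_indefinite_description _ (Hlead i))).
  assert (Hlead' : forall i, R (lead i) i /\ forall j, R j i -> lead i <= j).
  { intro i. exact (proj2_sig (constructive_indefinite_description _ (Hlead i))). }
  pose (L := fun i => forall j, j < i -> ~ R j i).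
  assert (Llead : forall i, L (lead i)).
  { intros i j Hj HR. destruct (Hlead' i) as [H1 H2].
    specialize (H2 j (Rtrans _ _ _ HR H1)). lia. }
  assert (lead_eq : forall i j, R i j -> lead i = lead j).
  { intros i j Hij. destruct (Hlead' i) as [Hi1 Hi2], (Hlead' j) as [Hj1 Hj2].
    apply Nat.le_antisymm.
    - apply Hi2. eapply Rtrans; [exact Hj1|]. apply Rsym; exact Hij.
    - apply Hj2. eapply Rtrans; [exact Hi1|exact Hij]. }
  assert (lead_L : forall i, L i -> lead i = i).
  { intros i Hi. destruct (Hlead' i) as [H1 H2]. specialize (H2 i (Rrefl i)).
    destruct (Nat.eq_dec (lead i) i) as [|Hne]; auto. exfalso. apply (Hi (lead i)); [lia|exact H1]. }
  pose (Cl := fun a j => R j a).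
  assert (Clext : forall i j, R i j -> forall k, Cl i k <-> Cl j k).
  { intros i j Hij k. unfold Cl. split; intro H; eapply Rtrans; eauto. }
  pose (ci := fun i => cnt L (lead i)).
  pose (pi := fun i => cnt (Cl i) i).
  assert (phi_inj : forall i j, ci i = ci j -> pi i = pi j -> i = j).
  { intros i j Hc Hp. unfold ci, pi in *.
    assert (Hl : lead i = lead j) by (apply (cnt_inj L); auto).
    assert (Hij : R i j).
    { eapply Rtrans; [apply Rsym; apply (Hlead' i)|]. rewrite Hl. apply (Hlead' j). }
    rewrite (cnt_ext (Cl j) (Cl i)) in Hp by (intro k; symmetry; apply Clext; exact Hij).
    apply (cnt_inj (Cl i)); auto. apply Rrefl. apply Rsym; exact Hij. }
  destruct (card_exists L) as [n Hn].
  destruct (card_exists (Cl 0)) as [m Hm].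
  assert (Hcr : forall a k, realized (Cl a) k -> realized (Cl 0) k).
  { intros a k. destruct (Hcls a 0) as [f [Hf1 Hf2]]. apply realized_transfer with f; auto. }
  assert (Hcr' : forall a k, realized (Cl 0) k -> realized (Cl a) k).
  { intros a k. destruct (Hcls 0 a) as [f [Hf1 Hf2]]. apply realized_transfer with f; auto. }
  assert (ci_below : forall i, below n (ci i)).
  { intro i. apply Hn. apply realized_iff. exists (lead i). split; auto. }
  assert (pi_below : forall i, below m (pi i)).
  { intro i. apply Hm. apply (Hcr i). apply realized_iff. exists i. split; auto. apply Rrefl. }
  assert (surj : forall c k, below n c -> below m k -> exists i, ci i = c /\ pi i = k).
  { intros c k Hc Hk. apply Hn in Hc. apply Hm in Hk.
    apply realized_iff in Hc. destruct Hc as [l [Hl Hlc]].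
    apply (Hcr' l) in Hk. apply realized_iff in Hk. destruct Hk as [i [Hi Hik]].
    exists i. split.
    - unfold ci. rewrite (lead_eq i l Hi), lead_L; auto.
    - unfold pi. rewrite (cnt_ext (Cl i) (Cl l)); auto. }
  assert (Hadj : forall i j, A i j <-> ci i = ci j /\ pi i <> pi j).
  { intros i j. split.
    - intro H. split.
      + unfold ci. rewrite (lead_eq i j); auto. right; exact H.
      + intro Hp. assert (i = j). { apply phi_inj; auto. unfold ci. rewrite (lead_eq i j); auto. right; exact H. }
        subst. exact (Hirr _ H).
    - intros [Hc Hp]. unfold ci in Hc.
      assert (Hl : lead i = lead j) by (apply (cnt_inj L); auto).
      assert (Hij : R i j).
      { eapply Rtrans; [apply Rsym; apply (Hlead' i)|]. rewrite Hl. apply (Hlead' j). }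
      destruct Hij as [Hij|Hij]; auto. subst. contradiction. }
  assert (Hpos : forall c, below c 0 -> positive_card c) by (intros [c|]; simpl; auto).
  exists n, m. split; [|split; [|split]].
  - apply Hpos, Hn, realized_iff. exists 0. split; auto. intros j Hj; lia.
  - apply Hpos, Hm, realized_iff. exists 0. split; auto. apply Rrefl.
  - destruct n as [N|]; [|left; auto]. destruct m as [M|]; [|right; auto]. exfalso.
    pose (l := map (fun i => (ci i, pi i)) (seq 0 (S (N * M)))).
    assert (Hnd : NoDup l).
    { apply NoDup_map_NoDup_ForallPairs; [|apply seq_NoDup].
      intros x y _ _ H. injection H as H1 H2. apply phi_inj; auto. }
    assert (Hincl : incl l (list_prod (seq 0 N) (seq 0 M))).
    { intros [a b] Hab. apply in_map_iff in Hab. destruct Hab as [x [Hx _]].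
      injection Hx as <- <-. apply in_prod_iff. split; apply in_seq; simpl.
      - specialize (ci_below x). simpl in ci_below. lia.
      - specialize (pi_below x). simpl in pi_below. lia. }
    pose proof (NoDup_incl_length Hnd Hincl) as H. unfold l in H.
    rewrite length_map, length_prod, !length_seq in H. lia.
  - exists (fun v => (ci (idx v), pi (idx v))). split; [|split; [|split]].
    + intro v. split; simpl; auto.
    + intros u v H. injection H as H1 H2. rewrite <- (Hidx u), <- (Hidx v). f_equal. apply phi_inj; auto.
    + intros [c k] [Hc Hk]. simpl in Hc, Hk. destruct (surj c k Hc Hk) as [i [Hi1 Hi2]].
      exists (e i). rewrite Hidx2, Hi1, Hi2. reflexivity.
    + intros u v. unfold IK_adj. simpl. rewrite <- Hadj. unfold A. rewrite !Hidx. tauto.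
Qed.
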